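(* Let $X$ and $Y$ be real Banach spaces. Then $(Lip_0(X,Y),Lip(\cdot))$ is isometrically isomorphic to $L(F_Y(X),Y)$, via the map $T\mapsto T\circ\delta_X^Y$.
   Context: $Lip_0(X,Y)$ is the Banach space of Lipschitz maps $f:X\to Y$ with $f(0)=0$ and norm $Lip(f)=\sup_{x\neq y}\|f(x)-f(y)\|/\|x-y\|$. For $x\in X$, $\delta_x^Y\in L(Lip_0(X,Y),Y)$ is evaluation $\delta_x^Y(f)=f(x)$, and $\delta_X^Y:X\to L(Lip_0(X,Y),Y)$ is the map $x\mapsto\delta_x^Y$. $F_Y(X)$ is the norm-closed linear span of $\{\delta_x^Y:x\in X\}$ in $L(Lip_0(X,Y),Y)$ with operator norm; $L(F_Y(X),Y)$ carries the operator norm. *)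

(* Defs.v *)
From HB Require Import structures.
From mathcomp Require Import all_boot all_order all_algebra.
From mathcomp Require Import all_classical all_reals all_analysis.
Set Implicit Arguments. Unset Strict Implicit. Unset Printing Implicit Defensive.
Import Order.TTheory GRing.Theory Num.Theory.
Import numFieldNormedType.Exports.
Local Open Scope classical_set_scope.
Local Open Scope ring_scope.

Section LipFree.
Context {R : realType} {X Y : normedModType R}.

(* Lipschitz constant Lip(f) = sup_{x<>y} |f x - f y| / |x - y|, as an
   extended real (+oo iff f is not Lipschitz).  0 is adjoined to the set
   (harmless, all ratios are >= 0) so that Lip(f) = 0, not -oo, when X = {0}. *)
Definition lipE (f : X -> Y) : \bar R :=
  ereal_sup ([set 0%E] `|`
    [set r | exists x y : X, x != y /\ r = (`|f x - f y| / `|x - y|)%:E]).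

Definition Lip0 : set (X -> Y) :=
  [set f | f 0 = 0 /\ (lipE f < +oo)%E].

(* Elements of L(Lip_0(X,Y), Y) are represented by functions
   Phi : (X -> Y) -> Y, only their values on Lip0 being relevant. *)
Definition lin_on_Lip0 (Phi : (X -> Y) -> Y) : Prop :=
  forall (a : R) (f g : X -> Y), Lip0 f -> Lip0 g ->
    Phi (fun x => a *: f x + g x) = a *: Phi f + Phi g.

Definition opnormE (Phi : (X -> Y) -> Y) : \bar R :=
  ereal_sup [set r | exists f, Lip0 f /\ (lipE f <= 1)%E /\ r = (`|Phi f|)%:E].

Definition LLip (Phi : (X -> Y) -> Y) : Prop :=
  lin_on_Lip0 Phi /\ (opnormE Phi < +oo)%E.

Definition delta (x : X) : (X -> Y) -> Y := fun f => f x.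

Definition FY : set ((X -> Y) -> Y) :=
  [set Phi | LLip Phi /\
    forall eps : R, 0 < eps -> exists (n : nat) (a : 'I_n -> R) (xs : 'I_n -> X),
      (opnormE (fun f => (Phi f - \sum_(i < n) a i *: delta (xs i) f)%R) < eps%:E)%E].

Definition opnormFE (T : ((X -> Y) -> Y) -> Y) : \bar R :=
  ereal_sup [set r | exists Phi, FY Phi /\ (opnormE Phi <= 1)%E /\ r = (`|T Phi|)%:E].

Definition LFY (T : ((X -> Y) -> Y) -> Y) : Prop :=
  (forall (a : R) (Phi Psi : (X -> Y) -> Y), FY Phi -> FY Psi ->
     T (fun f => a *: Phi f + Psi f) = a *: T Phi + T Psi)
  /\ (opnormFE T < +oo)%E.

End LipFree.

(* Main.v *)
Require Import Defs.
From HB Require Import structures.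
From mathcomp Require Import all_boot all_order all_algebra.
From mathcomp Require Import all_classical all_reals all_analysis.
Import Order.TTheory GRing.Theory Num.Theory.
Import numFieldNormedType.Exports.
Local Open Scope classical_set_scope.
Local Open Scope ring_scope.

Section H.
Context {R : realType} {X Y : normedModType R}.

Definition opn_le (Phi : (X -> Y) -> Y) (c : R) :=
  forall f, @Lip0 R X Y f -> (lipE f <= 1)%E -> `|Phi f| <= c.

Lemma opnE_le Phi c : (@opnormE R X Y Phi <= c%:E)%E <-> opn_le Phi c.
Proof.
split.
- move=> H f Hf Hl; rewrite -lee_fin; apply: le_trans H.
  by apply: ereal_sup_ubound; exists f.
- move=> H; apply: ge_ereal_sup => r [f [Hf [Hl ->]]]; rewrite lee_fin; exact: H.
Qed.

Definition lip_le (h : X -> Y) (c : R) := forall x y, `|h x - h y| <= c * `|x - y|.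

Lemma lipE_le h c : (@lipE R X Y h <= c%:E)%E <-> (0 <= c /\ lip_le h c).
Proof.
split.
- move=> H; split.
    by rewrite -lee_fin; apply: le_trans H; apply: ereal_sup_ubound; left.
  move=> x y; have [->|nxy] := eqVneq x y; first by rewrite !subrr !normr0 mulr0.
  have Hp : 0 < `|x - y| by rewrite normr_gt0 subr_eq0.
  rewrite -ler_pdivrMr //; rewrite -lee_fin; apply: le_trans H.
  by apply: ereal_sup_ubound; right; exists x, y.
- move=> [c0 H]; apply: ge_ereal_sup => r [->|[x [y [nxy ->]]]]; rewrite lee_fin //.
  have Hp : 0 < `|x - y| by rewrite normr_gt0 subr_eq0.
  by rewrite ler_pdivrMr.
Qed.

Lemma fin_bound (e : \bar R) : (e < +oo)%E -> exists c : R, 0 < c /\ (e <= c%:E)%E.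
Proof.
case: e => [r| |] => H.
- exists (`|r| + 1); split; first by rewrite ltr_wpDl.
  by rewrite lee_fin (le_trans (ler_norm r)) // lerDl.
- by rewrite ltxx in H.
- by exists 1; split => //; apply: leNye.
Qed.

Lemma zero_lem (z : Y) (K : R) : 0 <= K -> (forall c, 0 < c -> `|z| <= K * c) -> z = 0.
Proof.
move=> K0 H; apply/eqP; rewrite -normr_le0; apply/ler_addgt0Pr => e e0.
rewrite add0r.
have K1 : 0 < K + 1 by rewrite ltr_wpDl.
apply: (le_trans (H (e / (K + 1)) _)); first by rewrite divr_gt0.
by rewrite mulrA ler_pdivrMr // [K * e]mulrC ler_pM2l // lerDl ler01.
Qed.
Arguments zero_lem {z}.


Lemma lt_fin_ex (x : \bar R) (e : R) : (x < e%:E)%E -> exists d, d < e /\ (x <= d%:E)%E.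
Proof.
case: x => [r| |] H.
- by exists r; split; rewrite // -lte_fin.
- by [].
- by exists (e - 1); split; [rewrite ltrBlDr ltrDl ltr01 | apply: leNye].
Qed.

Lemma Lip0_zero : @Lip0 R X Y (fun _ => 0).
Proof.
split => //; apply: (@le_lt_trans _ _ 0%:E); last exact: ltry.
by apply/lipE_le; split => // x y; rewrite subrr normr0 mul0r.
Qed.

Lemma lin_zero Psi : @lin_on_Lip0 R X Y Psi -> Psi (fun _ => 0) = 0.
Proof.
move=> L; have := L 1 (fun _ => 0) (fun _ => 0) Lip0_zero Lip0_zero.
have -> : (fun x : X => 1 *: (0 : Y) + 0) = (fun _ => 0).
  by apply: funext => x; rewrite scaler0 addr0.
rewrite scale1r; set z := Psi _ => H.
have : z + 0 = z + z by rewrite addr0 {1}H.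
by move/addrI.
Qed.

Lemma b_lem Psi h c d : @lin_on_Lip0 R X Y Psi -> Lip0 h -> (lipE h <= c%:E)%E -> 0 < c ->
  (opnormE Psi <= d%:E)%E -> `|Psi h| <= c * d.
Proof.
move=> L Hh Hl c0 /opnE_le Hd.
move/lipE_le: Hl => [_ Hl].
have ci : 0 <= c^-1 by rewrite invr_ge0 ltW.
have Hl' : (lipE (fun x => (c^-1 *: h x + (fun _ : X => 0 : Y) x)%R) <= 1%:E)%E.
  apply/lipE_le; split => // x y /=; rewrite !addr0 -scalerBr normrZ.
  rewrite ger0_norm ?ci // mul1r ler_pdivrMl //; exact: Hl.
have Hh' : Lip0 (fun x => c^-1 *: h x + (fun _ : X => 0 : Y) x).
  split; first by rewrite /= Hh.1 scaler0 addr0.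
  exact: (le_lt_trans Hl' (ltry _)).
have := Hd _ Hh' Hl'; rewrite L //; last exact: Lip0_zero.
rewrite (lin_zero _ L) addr0 normrZ.
by rewrite ger0_norm ?ci // ler_pdivrMl.
Qed.
Arguments b_lem {Psi h c d}.


Lemma split_lshift m n (i : 'I_m) : fintype.split (lshift n i) = inl i.
Proof. exact: (unsplitK (inl _ i)). Qed.
Lemma split_rshift m n (i : 'I_n) : fintype.split (rshift m i) = inr i.
Proof. exact: (unsplitK (inr _ i)). Qed.

Lemma FY_comb a Phi Psi : @FY R X Y Phi -> FY Psi -> FY (fun f => a *: Phi f + Psi f).
Proof.
move=> [[l1 b1] ap1] [[l2 b2] ap2].
split; first split.
- move=> b f g Hf Hg; rewrite l1 // l2 //.
  by rewrite !scalerDr !scalerA [b * a]mulrC addrACA.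
- have [c1 [_ /opnE_le H1]] := fin_bound _ b1.
  have [c2 [_ /opnE_le H2]] := fin_bound _ b2.
  apply: (@le_lt_trans _ _ (`|a| * c1 + c2)%:E); last exact: ltry.
  apply/opnE_le => f Hf Hl; apply: le_trans (ler_normD _ _) _.
  rewrite normrZ; apply: lerD; last exact: H2.
  by apply: ler_wpM2l => //; exact: H1.
- move=> eps e0.
  have a1 : 0 < `|a| + 1 by rewrite ltr_wpDl.
  have e1p : 0 < eps / 2 / (`|a| + 1) by rewrite !divr_gt0.
  have e2p : 0 < eps / 2 by rewrite divr_gt0.
  have [n1 [u1 [x1 /lt_fin_ex [d1 [d1e /opnE_le D1]]]]] := ap1 _ e1p.
  have [n2 [u2 [x2 /lt_fin_ex [d2 [d2e /opnE_le D2]]]]] := ap2 _ e2p.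
  exists (n1 + n2)%N, (fun i => match fintype.split i with inl j => a * u1 j | inr k => u2 k end),
    (fun i => match fintype.split i with inl j => x1 j | inr k => x2 k end).
  apply: (@le_lt_trans _ _ (`|a| * d1 + d2)%:E).
    apply/opnE_le => f Hf Hl.
    rewrite big_split_ord /=.
    rewrite (eq_bigr (fun i => (a * u1 i) *: delta (x1 i) f)); last first.
      by move=> i _; rewrite split_lshift.
    rewrite (eq_bigr (fun i => u2 i *: delta (x2 i) f)); last first.
      by move=> i _; rewrite split_rshift.
    have -> : \sum_(i < n1) (a * u1 i) *: delta (x1 i) f = a *: \sum_(i < n1) u1 i *: delta (x1 i) f.
      by rewrite scaler_sumr; apply: eq_bigr => i _; rewrite scalerA.
    set S1 := \sum_(i < n1) _. set S2 := \sum_(i < n2) _.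
    have -> : a *: Phi f + Psi f - (a *: S1 + S2) = a *: (Phi f - S1) + (Psi f - S2).
      by rewrite scalerBr opprD addrACA.
    apply: le_trans (ler_normD _ _) _.
    rewrite normrZ; apply: lerD; last exact: D2.
    by apply: ler_wpM2l => //; exact: D1.
  rewrite lte_fin [eps]splitr; apply: ler_ltD => //.
  apply: le_trans (_ : `|a| * (eps / 2 / (`|a| + 1)) <= _).
    by apply: ler_wpM2l => //; exact: ltW.
  rewrite mulrA ler_pdivrMr // [_ * (_ + 1)]mulrC ler_pM2r ?divr_gt0 //.
  by rewrite lerDl.
Qed.
Arguments FY_comb a {Phi Psi}.

Lemma FY_zero : @FY R X Y (fun _ => 0).
Proof.
split; first split.
- by move=> a f g _ _; rewrite scaler0 addr0.
- apply: (@le_lt_trans _ _ 0%:E); last exact: ltry.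
  by apply/opnE_le => f _ _; rewrite normr0.
- move=> eps e0; exists 0%N, (fun _ => 0), (fun _ => 0).
  apply: (@le_lt_trans _ _ 0%:E); last by rewrite lte_fin.
  by apply/opnE_le => f _ _; rewrite big_ord0 subrr normr0.
Qed.

Lemma opn_delta x : opn_le (@delta R X Y x) `|x|.
Proof.
move=> f [f0 _] /lipE_le [_ Hl]; rewrite /delta.
by have := Hl x 0; rewrite f0 !subr0 mul1r.
Qed.

Lemma FY_delta x : @FY R X Y (delta x).
Proof.
split; first split.
- by [].
- apply: (@le_lt_trans _ _ `|x|%:E); last exact: ltry.
  by apply/opnE_le; exact: opn_delta.
- move=> eps e0; exists 1%N, (fun _ => 1), (fun _ => x).
  apply: (@le_lt_trans _ _ 0%:E); last by rewrite lte_fin.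
  by apply/opnE_le => f _ _; rewrite big_ord1 scale1r subrr normr0.
Qed.


Lemma opnFE_le T c : (@opnormFE R X Y T <= c%:E)%E <->
  (forall Phi, FY Phi -> (opnormE Phi <= 1)%E -> `|T Phi| <= c).
Proof.
split.
- move=> H Phi HF Hl; rewrite -lee_fin; apply: le_trans H.
  by apply: ereal_sup_ubound; exists Phi.
- move=> H; apply: ge_ereal_sup => r [Phi [HF [Hl ->]]]; rewrite lee_fin; exact: H.
Qed.

Lemma T_zero T : @LFY R X Y T -> T (fun _ => 0) = 0.
Proof.
move=> [L _]; have := L 1 (fun _ => 0) (fun _ => 0) FY_zero FY_zero.
have -> : (fun f : X -> Y => 1 *: (0 : Y) + 0) = (fun _ => 0).
  by apply: funext => x; rewrite scaler0 addr0.
rewrite scale1r; set z := T _ => H.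
have : z + 0 = z + z by rewrite addr0 {1}H.
by move/addrI.
Qed.

Lemma a_lem T M Psi c : @LFY R X Y T -> (opnormFE T <= M%:E)%E -> FY Psi ->
  (opnormE Psi <= c%:E)%E -> 0 < c -> `|T Psi| <= M * c.
Proof.
move=> HT /opnFE_le HM HP /opnE_le Hc c0.
have ci : 0 <= c^-1 by rewrite invr_ge0 ltW.
have HF := FY_comb (c^-1) HP FY_zero.
have Hl : (opnormE (fun f => (c^-1 *: Psi f + (fun _ : X -> Y => 0 : Y) f)%R) <= 1%:E)%E.
  apply/opnE_le => f Hf Hl /=; rewrite addr0 normrZ ger0_norm // ler_pdivrMl // mulr1.
  exact: Hc.
have := HM _ HF Hl; rewrite HT.1 //; last exact: FY_zero.
rewrite T_zero // addr0 normrZ ger0_norm // ler_pdivrMl // mulrC //.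
Qed.
Arguments a_lem {T M Psi c}.

Lemma T_sum T n (u : 'I_n -> R) (xs : 'I_n -> X) : @LFY R X Y T ->
  FY (fun f : X -> Y => \sum_(i < n) u i *: delta (xs i) f) /\
  T (fun f : X -> Y => \sum_(i < n) u i *: delta (xs i) f) = \sum_(i < n) u i *: T (delta (xs i)).
Proof.
move=> HT; elim: n u xs => [|n IH] u xs.
  have -> : (fun f : X -> Y => \sum_(i < 0) u i *: delta (xs i) f) = (fun _ => 0).
    by apply: funext => f; rewrite big_ord0.
  by rewrite big_ord0 T_zero //; split => //; exact: FY_zero.
have [IH1 IH2] := IH (fun i => u (widen_ord (leqnSn n) i)) (fun i => xs (widen_ord (leqnSn n) i)).
have -> : (fun f : X -> Y => \sum_(i < n.+1) u i *: delta (xs i) f) =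
  (fun f => u ord_max *: delta (xs ord_max) f +
     (fun f => \sum_(i < n) u (widen_ord (leqnSn n) i) *: delta (xs (widen_ord (leqnSn n) i)) f) f).
  by apply: funext => f; rewrite big_ord_recr addrC.
split; first exact: FY_comb (FY_delta _) IH1.
by rewrite HT.1 //; [rewrite IH2 big_ord_recr addrC | exact: FY_delta].
Qed.
Arguments T_sum {T n}.

Lemma g_lip T M : @LFY R X Y T -> (opnormFE T <= M%:E)%E -> 0 < M ->
  Lip0 (fun x => T (delta x)) /\ (lipE (fun x => T (delta x)) <= M%:E)%E.
Proof.
move=> HT HM M0.
have Hl : (lipE (fun x => T (delta x)) <= M%:E)%E.
  apply/lipE_le; split; first exact: ltW.
  move=> x y; have [->|nxy] := eqVneq x y; first by rewrite !subrr !normr0 mulr0.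
  have Hp : 0 < `|x - y| by rewrite normr_gt0 subr_eq0.
  have HF := FY_comb (-1) (FY_delta y) (FY_delta x).
  have := a_lem HT HM HF _ Hp; rewrite HT.1; try exact: FY_delta.
  rewrite scaleN1r [- T _ + _]addrC; apply.
  apply/opnE_le => f Hf /lipE_le [_ Hlf]; rewrite /delta scaleN1r [- f y + _]addrC.
  by rewrite -[`|x - y|]mul1r; exact: Hlf.
split; last exact: Hl.
split; last exact: (le_lt_trans Hl (ltry _)).
apply: (zero_lem M); first exact: ltW.
move=> c c0; have c0w := ltW c0; apply: a_lem HT HM (FY_delta 0) _ c0.
apply/opnE_le => f [f0 _] _; rewrite /delta f0 normr0; exact: c0w.
Qed.
Arguments g_lip {T M}.

Lemma key T M : @LFY R X Y T -> (opnormFE T <= M%:E)%E -> 0 < M ->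
  forall Phi, FY Phi -> T Phi = Phi (fun x => T (delta x)).
Proof.
move=> HT HM M0 Phi HP.
have [Hg Hgl] := g_lip HT HM M0.
set g := fun x => T (delta x) in Hg Hgl *.
apply/eqP; rewrite -subr_eq0; apply/eqP.
apply: (zero_lem (M + M)); first by rewrite addr_ge0 // ltW.
move=> c c0.
have [n [u [xs Hap]]] := HP.2 c c0.
have [HS TS] := T_sum u xs HT.
set S := (fun f => \sum_(i < n) u i *: delta (xs i) f) in HS TS.
have eD : (fun f => (-1) *: S f + Phi f) = (fun f => Phi f - \sum_(i < n) u i *: delta (xs i) f).
  by apply: funext => f; rewrite scaleN1r addrC.
have HD := FY_comb (-1) HS HP.
have HDc : (opnormE (fun f => ((-1) *: S f + Phi f)%R) <= c%:E)%E.
  by rewrite eD; exact: ltW.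
have H1 := a_lem HT HM HD HDc c0.
have H2 := b_lem HD.1.1 Hg Hgl M0 HDc.
rewrite HT.1 // TS scaleN1r in H1.
rewrite /= scaleN1r in H2.
have -> : T Phi - Phi g = (- (\sum_(i < n) u i *: T (delta (xs i))) + T Phi) - (- S g + Phi g).
  have SG : S g = \sum_(i < n) u i *: T (delta (xs i)) by [].
  by rewrite SG opprD opprK addrACA addNr add0r.
by rewrite mulrDl; apply: le_trans (ler_normB _ _) _; apply: lerD.
Qed.
Arguments key {T M}.


Lemma lipE_ge0 h : (0 <= @lipE R X Y h)%E.
Proof. by apply: ereal_sup_ubound; left. Qed.

End H.

Arguments zero_lem {R Y} {z}.
Arguments b_lem {R X Y} {Psi h c d}.
Arguments FY_comb {R X Y} a {Phi Psi}.
Arguments a_lem {R X Y} {T M Psi c}.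
Arguments T_sum {R X Y} {T n}.
Arguments g_lip {R X Y} {T M}.
Arguments key {R X Y} {T M}.

Theorem mainTheorem9 (R : realType) (X Y : completeNormedModType R) :
  (* maps into Lip_0 and is isometric *)
  (forall T : ((X -> Y) -> Y) -> Y, LFY T ->
     Lip0 (fun x : X => T (delta x)) /\ lipE (fun x : X => T (delta x)) = opnormFE T)
  /\
  (* surjective *)
  (forall f : X -> Y, Lip0 f ->
     exists T : ((X -> Y) -> Y) -> Y, LFY T /\ forall x : X, T (delta x) = f x)
  /\
  (* injective (as operators on F_Y(X)) *)
  (forall T1 T2 : ((X -> Y) -> Y) -> Y, LFY T1 -> LFY T2 ->
     (forall x : X, T1 (delta x) = T2 (delta x)) ->
     forall Phi, FY Phi -> T1 Phi = T2 Phi).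
Proof.
split; [|split].
- move=> T HT.
  have [M [M0 HM]] := fin_bound _ HT.2.
  have [Hg Hgl] := g_lip HT HM M0.
  split => //.
  have Kg := key HT HM M0.
  set g := fun x => T (delta x) in Hg Hgl Kg *.
  apply: le_anti; apply/andP; split.
  + apply: ge_ereal_sup => r [->|[x [y [nxy ->]]]].
    * apply: ereal_sup_ubound; exists (fun _ => 0); split; first exact: FY_zero.
      split; last by rewrite T_zero // normr0.
      by apply/opnE_le => f _ _; rewrite normr0 ler01.
    * have Hp : 0 < `|x - y| by rewrite normr_gt0 subr_eq0.
      have ki : 0 <= `|x - y|^-1 by rewrite invr_ge0 normr_ge0.
      have HF := FY_comb (`|x - y|^-1) (FY_comb (-1) (FY_delta y) (FY_delta x)) FY_zero.
      apply: ereal_sup_ubound; exists (fun f => `|x - y|^-1 *: ((-1) *: delta y f + delta x f) + (fun _ : X -> Y => 0 : Y) f).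
      split; first exact: HF.
      split.
        apply/opnE_le => f Hf /lipE_le [_ Hlf] /=.
        rewrite addr0 normrZ ger0_norm // /delta scaleN1r [- f y + _]addrC.
        by rewrite ler_pdivrMl // mulr1 -[`|x - y|]mul1r; exact: Hlf.
      rewrite Kg // /= addr0 normrZ ger0_norm // /delta scaleN1r [- g y + _]addrC.
      by rewrite mulrC.
  + have [L HL] : exists L, lipE g = L%:E.
      move: (lipE_ge0 g) (le_lt_trans Hgl (ltry _)); case: (lipE g) => [r| |] //.
      by move=> _ _; exists r.
    have L0 : 0 <= L by rewrite -lee_fin -HL lipE_ge0.
    rewrite HL; apply/opnFE_le => Phi HP Hl; rewrite Kg //.
    apply/ler_addgt0Pr => e e0.
    have := b_lem HP.1.1 Hg (_ : lipE g <= (L + e)%:E)%E (_ : 0 < L + e) Hl.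
    rewrite mulr1; apply.
      by rewrite HL lee_fin lerDl ltW.
    by rewrite ltr_wpDl.
- move=> f Hf; exists (fun Phi => Phi f); split => //; split => //.
  have [c [c0 Hc]] := fin_bound _ Hf.2.
  apply: (le_lt_trans _ (ltry c)); apply/opnFE_le => Phi HP Hl.
  by have := b_lem HP.1.1 Hf Hc c0 Hl; rewrite mulr1.
- move=> T1 T2 H1 H2 E Phi HP.
  have [M1 [M10 HM1]] := fin_bound _ H1.2.
  have [M2 [M20 HM2]] := fin_bound _ H2.2.
  rewrite (key H1 HM1 M10) // (key H2 HM2 M20) //.
  by congr Phi; apply: funext => x; exact: E.
Qed.
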